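(* Let $m\ge 1$. If $m=2t$ is even, then $\alpha_{m+1,k}=2(2m+1-k)\alpha_{m,k}-(4k-1)\beta_{m,k-1}$ for $1\le k\le t$; $\beta_{m+1,k}=(1+4k)\alpha_{m,k}+(4m+2k+3)\beta_{m,k}$ for $0\le k\le t-1$; $\alpha_{m+1,0}=2(2m+1)\alpha_{m,0}$ and $\beta_{m+1,t}=(1+4t)\alpha_{m,t}$. If $m=2t+1$ is odd, then $\alpha_{m+1,k}=2(2m+1-k)\alpha_{m,k}-(4k-1)\beta_{m,k-1}$ for $1\le k\le t$; $\alpha_{m+1,0}=2(2m+1)\alpha_{m,0}$ and $\alpha_{m+1,t+1}=-(3+4t)\beta_{m,t}$; $\beta_{m+1,k}=(1+4k)\alpha_{m,k}+(4m+2k+3)\beta_{m,k}$ for $0\le k\le t$.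
   Context: $P_m(x)=\sum_{i=0}^m d_i(m)x^i$ with $d_i(m)=2^{-2m}\sum_{k=i}^m 2^k\binom{2m-2k}{m-k}\binom{m+k}{k}\binom{k}{i}$; $Q_m(x)=2^m m!\,x^mP_m(1/x)$ (degree $m$). $(a_m(x),b_m(x))$ is the symmetric decomposition of $Q_m$: $a_m(x)=\frac{Q_m(x)-x^{m+1}Q_m(1/x)}{1-x}$, $b_m(x)=\frac{x^mQ_m(1/x)-Q_m(x)}{1-x}$. The numbers $\alpha_{m,k},\beta_{m,k}$ are the unique coefficients with $a_m(x)=\sum_{k=0}^{\lfloor m/2\rfloor}\alpha_{m,k}x^k(1+x)^{m-2k}$ and $b_m(x)=\sum_{k=0}^{\lfloor (m-1)/2\rfloor}\beta_{m,k}x^k(1+x)^{m-1-2k}$. *)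

(* Defs.v *)
From HB Require Import structures.
From mathcomp Require Import all_boot all_order all_algebra.
Set Implicit Arguments. Unset Strict Implicit. Unset Printing Implicit Defensive.
Import Order.TTheory GRing.Theory Num.Theory.
Local Open Scope ring_scope.

Definition dcoef (m i : nat) : rat :=
  (2%:R ^+ (2 * m))^-1 *
  \sum_(i <= k < m.+1)
     ((2 ^ k * 'C(2 * m - 2 * k, m - k) * 'C(m + k, k) * 'C(k, i))%N)%:R.

Definition Ppoly (m : nat) : {poly rat} :=
  \sum_(i < m.+1) dcoef m i *: 'X^i.

(* Q_m(x) = 2^m m! x^m P_m(1/x) = sum_{i=0}^m 2^m m! d_i(m) x^(m-i) *)
Definition Qpoly (m : nat) : {poly rat} :=
  \sum_(i < m.+1) ((2 ^ m * m`!)%N%:R * dcoef m i) *: 'X^(m - i).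

(* x^m Q_m(1/x) = sum_{i=0}^m 2^m m! d_i(m) x^i  (Q_m has degree <= m) *)
Definition Qrev (m : nat) : {poly rat} :=
  \sum_(i < m.+1) ((2 ^ m * m`!)%N%:R * dcoef m i) *: 'X^i.

Definition apoly (m : nat) : {poly rat} :=
  (Qpoly m - 'X * Qrev m) %/ (1 - 'X).

Definition bpoly (m : nat) : {poly rat} :=
  (Qrev m - Qpoly m) %/ (1 - 'X).

(* Main.v *)
Require Import Defs.
From HB Require Import structures.
From mathcomp Require Import all_boot all_order all_algebra.
From mathcomp Require Import ring lra zify.
Import Order.TTheory GRing.Theory Num.Theory.
Local Open Scope ring_scope.
Set Implicit Arguments. Unset Strict Implicit. Unset Printing Implicit Defensive.

Definition E (n k : nat) : rat := ((2 ^ k * 'C(2 * n - 2 * k, n - k) * 'C(n + k, k))%N)%:R.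

Lemma central (n : nat) : (n.+1 * 'C((2*n).+2, n.+1) = 2 * (2*n).+1 * 'C(2*n, n))%N.
Proof.
have h1 := mul_bin_diag (2*n).+1 n.
have h2 := mul_bin_diag (2*n).+2 n.
have h3 : 'C((2*n).+1, n) = 'C((2*n).+1, n.+1).
  by rewrite -(bin_sub (_ : n.+1 <= (2*n).+1)%N); [congr 'C(_,_); lia | lia].
apply/eqP; rewrite -(eqn_pmul2l (ltn0Sn n)); apply/eqP.
simpl in h1, h2. rewrite h3 in h2. nia.
Qed.
Lemma Eid (m j : nat) : (j <= m.+1)%N ->
  (m.+1)%:R * E m.+1 j =
  2 * ((if (j <= m)%N then ((2* m+1)%:R - 2 * j%:R) * E m j else 0) +
       (if j is j'.+1 then ((2 * m + 2)%:R + 2 * j'%:R) * E m j' else 0)).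
Proof.
move=> hj; rewrite /E.
case: (ltngtP j m.+1) hj => // [hjm _|-> _]; last first.
  rewrite ltnn add0r !subnn !bin0 !muln1.
  have hc := central m.
  have -> : ((m.+1 + m.+1) = (2 * m).+2)%N by lia.
  have -> : ((m + m) = (2 * m))%N by lia.
  have := congr1 (fun x : nat => x%:R : rat) hc.
  rewrite /= !natrM => hc'.
  rewrite (_ : (m.+1)%:R * ((2 ^ m.+1)%:R * ('C((2 * m).+2, m.+1))%:R) = (2 ^ m.+1)%:R * ((m.+1)%:R * ('C((2 * m).+2, m.+1))%:R)); last ring.
  rewrite hc' expnS !natrM -!natr1. ring.
rewrite ltnS in hjm; rewrite hjm.
have [n ->] : exists n, m = (n + j)%N by exists (m - j)%N; lia.
have e1 : (2 * (n + j).+1 - 2 * j = (2*n).+2)%N by lia.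
have e2 : ((n + j).+1 - j = n.+1)%N by lia.
have e3 : (2 * (n + j) - 2 * j = 2*n)%N by lia.
have e4 : ((n + j) - j = n)%N by lia.
rewrite e1 e2 e3 e4.
have hc := congr1 (fun x : nat => x%:R : rat) (central n). rewrite /= !natrM in hc.
have f2 := congr1 (fun x : nat => x%:R : rat) (mul_bin_down (n + j + j).+1 j).
rewrite /= !natrM in f2.
case: j hjm e1 e2 e3 e4 f2 => [|j'] hjm e1 e2 e3 e4 f2.
  rewrite !addn0 !bin0 !muln1 !expn0 !mul1n addr0 mulr0 subr0.
  rewrite hc -!natr1. ring.
have e5 : (2 * (n + j'.+1) - 2 * j' = (2*n).+2)%N by lia.
have e6 : ((n + j'.+1) - j' = n.+1)%N by lia.
rewrite e5 e6.
have f3 := congr1 (fun x : nat => x%:R : rat) (mul_bin_diag (n + j'.+1 + j'.+1) j').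
rewrite /= !natrM in f3.
have -> : ((n + j'.+1).+1 + j'.+1 = (n + j'.+1 + j'.+1).+1)%N by lia.
have e7 : ((n + j'.+1 + j'.+1).-1 = n + j'.+1 + j')%N by lia.
have e8 : ((n + j'.+1 + j'.+1).+1 - j'.+1 = (n + j'.+1).+1)%N by lia.
rewrite e7 in f3; rewrite e8 in f2.
rewrite !natrM expnS natrM.
set A := (2 ^ j')%:R : rat.
apply: (@etrans _ _ (2 * A * 'C((2 * n).+2, n.+1)%:R * ((n + j'.+1).+1%:R * 'C((n + j'.+1 + j'.+1).+1, j'.+1)%:R))); first ring.
rewrite -f2.
apply: (@etrans _ _ (2 * A * 'C(n + j'.+1 + j'.+1, j'.+1)%:R * (2 * (2 * n).+1%:R * 'C(2 * n, n)%:R) + 4 * A * 'C((2 * n).+2, n.+1)%:R * ((n + j'.+1 + j'.+1)%:R * 'C(n + j'.+1 + j', j')%:R))); last first.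
  ring.
rewrite -hc f3. ring.
Qed.

Definition Top (m : nat) (p : {poly rat}) : {poly rat} :=
  (2 * m + 1)%:R * (2 + 3 * 'X) * p - 2 * 'X * (1 + 'X) * p^`().
Definition Sop (m : nat) (p : {poly rat}) : {poly rat} :=
  ((2 * m + 2)%:R * 'X + (4 * m + 3)%:R) * p + 2 * 'X * (1 + 'X) * p^`().

Lemma Xd k : 'X * ('X^k)^`() = k%:R * ('X^k : {poly rat}).
Proof. rewrite derivXn; case: k => [|k] /=; first by rewrite !mulr0n mulr0 mul0r.
by rewrite mulrnAr -exprS mulr_natl.
Qed.

Lemma Yd e : (1 + 'X) * ((1 + 'X)^+e)^`() = e%:R * ((1 + 'X)^+e : {poly rat}).
Proof. rewrite deriv_exp derivD derivC derivX add0r mul1r.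
case: e => [|e] /=; first by rewrite !mulr0n mulr0 mul0r.
by rewrite mulrnAr -exprS mulr_natl.
Qed.

Lemma Top_u (m k : nat) : (k <= m)%N ->
  Top m ((1 + 'X)^+k * 'X^(m - k)) =
  ((2 * m + 1)%:R - 2 * k%:R) *: ((1 + 'X)^+k * 'X^(m.+1 - k))
  + ((2 * m + 2)%:R + 2 * k%:R) *: ((1 + 'X)^+k.+1 * 'X^(m.+1 - k.+1)).
Proof.
move=> hk; rewrite /Top derivM.
have -> : 2 * 'X * (1 + 'X) * (((1 + 'X)^+k)^`() * 'X^(m - k) + (1 + 'X)^+k * ('X^(m - k))^`()) = 2 * 'X * 'X^(m - k) * ((1 + 'X) * ((1 + 'X)^+k)^`()) + 2 * (1 + 'X) * (1 + 'X)^+k * ('X * ('X^(m - k))^`()) :> {poly rat} by ring.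
rewrite Xd Yd subSS subSn // exprS !exprS -!mul_polyC natrB //.
ring.
Qed.

Lemma Sop_u (m k : nat) :
  Sop m ((1 + 'X)^+k) =
  ((2 * m + 1)%:R - 2 * k%:R) *: (1 + 'X)^+k
  + ((2 * m + 2)%:R + 2 * k%:R) *: (1 + 'X)^+k.+1.
Proof.
rewrite /Sop.
have -> : 2 * 'X * (1 + 'X) * ((1 + 'X)^+k)^`() = 2 * 'X * ((1 + 'X) * ((1 + 'X)^+k)^`()) :> {poly rat} by ring.
rewrite Yd exprS -!mul_polyC.
ring.
Qed.

Definition ga (n k : nat) : {poly rat} := 'X^k * (1 + 'X)^+(n - 2 * k).
Definition gb (n k : nat) : {poly rat} := 'X^k * (1 + 'X)^+(n - 1 - 2 * k).

Lemma dXY (k e : nat) : (2 * 'X * (1 + 'X) * ('X^k * (1 + 'X)^+e)^`() : {poly rat}) =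
   2 * k%:R * 'X^k * (1 + 'X)^+e.+1 + 2 * e%:R * 'X^(k.+1) * (1 + 'X)^+e.
Proof.
rewrite derivM.
have -> : 2 * 'X * (1 + 'X) * (('X^k)^`() * (1 + 'X)^+e + 'X^k * ((1 + 'X)^+e)^`())
  = 2 * (1 + 'X) * (1 + 'X)^+e * ('X * ('X^k)^`()) + 2 * 'X * 'X^k * ((1 + 'X) * ((1 + 'X)^+e)^`()) :> {poly rat} by ring.
rewrite Xd Yd !exprS. ring.
Qed.

Lemma Top_ga (m k : nat) : (2 * k <= m)%N ->
  Top m (ga m k) = (2 * ((2 * m + 1)%:R - k%:R)) *: ga m.+1 k + (1 + 4 * k%:R) *: ('X * ga m k).
Proof.
move=> hk; rewrite /Top /ga subSn // -mulrA dXY natrB // exprS !exprS -!mul_polyC. ring.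
Qed.

Lemma Sop_ga (m k : nat) : (2 * k <= m)%N ->
  Sop m (ga m k) = (2 * ((2 * m + 1)%:R - k%:R)) *: ga m.+1 k + (1 + 4 * k%:R) *: ga m k.
Proof.
move=> hk; rewrite /Sop /ga subSn // dXY natrB // !exprS -!mul_polyC. ring.
Qed.

Lemma Top_gb (m k : nat) : (2 * k < m)%N ->
  Top m ('X * gb m k) = (- (4 * k%:R + 3)) *: ga m.+1 k.+1 + (4 * m%:R + 2 * k%:R + 3) *: ('X * ga m k).
Proof.
move=> hk; rewrite /Top /ga /gb.
have -> : (m.+1 - 2 * k.+1 = m - 1 - 2 * k)%N by lia.
have -> : (m - 2 * k = (m - 1 - 2 * k).+1)%N by lia.
have -> : 'X * ('X^k * (1 + 'X) ^+ (m - 1 - 2 * k)) = 'X^(k.+1) * (1 + 'X) ^+ (m - 1 - 2 * k) :> {poly rat} by rewrite exprS mulrA.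
rewrite -mulrA dXY.
have -> : ((m - 1 - 2 * k)%:R = m%:R - 1 - 2 * k%:R :> {poly rat}).
  rewrite natrB; last lia. rewrite natrB; last lia. by rewrite natrM.
rewrite !exprS -!mul_polyC. ring.
Qed.

Lemma Sop_gb (m k : nat) : (2 * k < m)%N ->
  Sop m (gb m k) = (- (4 * k%:R + 3)) *: ga m.+1 k.+1 + (4 * m%:R + 2 * k%:R + 3) *: ga m k.
Proof.
move=> hk; rewrite /Sop /ga /gb.
have -> : (m.+1 - 2 * k.+1 = m - 1 - 2 * k)%N by lia.
have -> : (m - 2 * k = (m - 1 - 2 * k).+1)%N by lia.
rewrite dXY.
have -> : ((m - 1 - 2 * k)%:R = m%:R - 1 - 2 * k%:R :> {poly rat}).
  rewrite natrB; last lia. rewrite natrB; last lia. by rewrite natrM.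
rewrite !exprS -!mul_polyC. ring.
Qed.

Definition K (m : nat) : rat := (2 ^ m * m`!)%N%:R * (2%:R ^+ (2 * m))^-1.

Lemma widen (V : nmodType) (k m : nat) (F : nat -> V) : (k <= m)%N ->
  (forall i, (k < i)%N -> F i = 0) ->
  \sum_(i < m.+1) F i = \sum_(i < k.+1) F i.
Proof.
move=> hk hF; rewrite -!(big_mkord xpredT).
rewrite (@big_cat_nat _ _ _ k.+1) //=.
rewrite [X in _ + X]big_nat_cond [X in _ + X]big1 ?addr0 // => i /andP [/andP [hi _] _].
exact: hF.
Qed.

Lemma BinR (k m : nat) : (k <= m)%N ->
  \sum_(i < m.+1) ('C(k, i)%:R : rat) *: ('X^i : {poly rat}) = (1 + 'X)^+k.
Proof.
move=> hk; rewrite (@widen _ k m (fun i => ('C(k, i)%:R : rat) *: ('X^i : {poly rat})) hk); last first.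
  by move=> i hi; rewrite bin_small // scale0r.
rewrite addrC exprD1n; apply: eq_bigr => i _; by rewrite scaler_nat.
Qed.

Lemma BinQ (k m : nat) : (k <= m)%N ->
  \sum_(i < m.+1) ('C(k, i)%:R : rat) *: ('X^(m - i) : {poly rat}) = (1 + 'X)^+k * 'X^(m - k).
Proof.
move=> hk; rewrite (@widen _ k m (fun i => ('C(k, i)%:R : rat) *: ('X^(m - i) : {poly rat})) hk); last first.
  by move=> i hi; rewrite bin_small // scale0r.
rewrite addrC exprDn mulr_suml; apply: eq_bigr => [[i hi]] _ /=.
rewrite mulrnAl -scaler_nat; congr (_ *: _); rewrite expr1n mulr1 -exprD; congr ('X^_); lia.
Qed.

Lemma innerF (m i : nat) (F : nat -> rat) : (i <= m.+1)%N ->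
  (forall k, (k < i)%N -> F k = 0) ->
  \sum_(i <= k < m.+1) F k = \sum_(k < m.+1) F k.
Proof.
move=> hi hF; rewrite -(big_mkord xpredT) (@big_cat_nat _ _ _ i 0 m.+1) //=.
rewrite [X in X + _]big_nat_cond [X in X + _]big1 ?add0r // => k /andP [/andP [_ hk] _].
exact: hF.
Qed.

Lemma dcoefE (m i : nat) : (i <= m)%N ->
  dcoef m i = (2%:R ^+ (2 * m))^-1 * \sum_(k < m.+1) E m k * 'C(k, i)%:R.
Proof.
move=> hi; rewrite /dcoef innerF; [| lia | by move=> k hk; rewrite (bin_small hk) muln0].
congr (_ * _); apply: eq_bigr => k _; by rewrite /E natrM.
Qed.

Lemma Rform m : Qrev m = K m *: \sum_(k < m.+1) E m k *: (1 + 'X)^+k.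
Proof.
rewrite /Qrev.
have H : forall i : 'I_m.+1, ((2 ^ m * m`!)%N%:R * dcoef m i) *: ('X^i : {poly rat}) =
   \sum_(k < m.+1) (K m * (E m k * 'C(k, i)%:R)) *: 'X^i.
  move=> i; rewrite (dcoefE (ltnSE (ltn_ord i))) mulrA mulr_sumr scaler_suml.
  reflexivity.
rewrite (eq_bigr _ (fun i _ => H i)) exchange_big scaler_sumr /=; apply: eq_bigr => k _.
rewrite -(BinR (ltnSE (ltn_ord k))) !scaler_sumr; apply: eq_bigr => i _.
by rewrite !scalerA mulrA.
Qed.

Lemma Qform m : Qpoly m = K m *: \sum_(k < m.+1) E m k *: ((1 + 'X)^+k * 'X^(m - k)).
Proof.
rewrite /Qpoly.
have H : forall i : 'I_m.+1, ((2 ^ m * m`!)%N%:R * dcoef m i) *: ('X^(m - i) : {poly rat}) =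
   \sum_(k < m.+1) (K m * (E m k * 'C(k, i)%:R)) *: 'X^(m - i).
  move=> i; rewrite (dcoefE (ltnSE (ltn_ord i))) mulrA mulr_sumr scaler_suml.
  reflexivity.
rewrite (eq_bigr _ (fun i _ => H i)) exchange_big scaler_sumr /=; apply: eq_bigr => k _.
rewrite -(BinQ (ltnSE (ltn_ord k))) !scaler_sumr; apply: eq_bigr => i _.
by rewrite !scalerA mulrA.
Qed.

Lemma Top_add m p q : Top m (p + q) = Top m p + Top m q.
Proof. rewrite /Top derivD; ring. Qed.
Lemma Top_scale m c p : Top m (c *: p) = c *: Top m p.
Proof. rewrite /Top derivZ -!mul_polyC; ring. Qed.
Lemma Top0 m : Top m 0 = 0.
Proof. rewrite /Top deriv0; ring. Qed.
Lemma Top_sum m (I : Type) (r : seq I) (P : pred I) (F : I -> {poly rat}) :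
  Top m (\sum_(i <- r | P i) F i) = \sum_(i <- r | P i) Top m (F i).
Proof. exact: (big_morph _ (Top_add m) (Top0 m)). Qed.

Lemma Sop_add m p q : Sop m (p + q) = Sop m p + Sop m q.
Proof. rewrite /Sop derivD; ring. Qed.
Lemma Sop_scale m c p : Sop m (c *: p) = c *: Sop m p.
Proof. rewrite /Sop derivZ -!mul_polyC; ring. Qed.
Lemma Sop0 m : Sop m 0 = 0.
Proof. rewrite /Sop deriv0; ring. Qed.
Lemma Sop_sum m (I : Type) (r : seq I) (P : pred I) (F : I -> {poly rat}) :
  Sop m (\sum_(i <- r | P i) F i) = \sum_(i <- r | P i) Sop m (F i).
Proof. exact: (big_morph _ (Sop_add m) (Sop0 m)). Qed.

Lemma shift (N : nat) (c d : nat -> rat) (w : nat -> {poly rat}) :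
  \sum_(k < N.+1) (c k *: w k + d k *: w k.+1) =
  \sum_(j < N.+2) ((if (j <= N)%N then c j else 0) + (if (j : nat) is j'.+1 then d j' else 0)) *: w j.
Proof.
under [RHS]eq_bigr do rewrite scalerDl.
rewrite big_split /= big_split /=; congr (_ + _).
  rewrite [in RHS]big_ord_recr /= ltnn scale0r addr0; apply: eq_bigr => k _.
  by rewrite (ltnSE (ltn_ord k)).
by rewrite [in RHS]big_ord_recl /= scale0r add0r.
Qed.

Lemma Kstep m : K m.+1 * 2 = K m * (m.+1)%:R.
Proof.
rewrite /K factS expnS !natrM.
have -> : (2 * m.+1 = (2 * m).+2)%N by lia.
rewrite !exprS.
have h : (2%:R : rat) ^+ (2 * m) != 0 by rewrite expf_neq0 // pnatr_eq0.
field. by rewrite h.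
Qed.

Lemma coefK m j (S : rat) : (m.+1%:R * E m.+1 j = 2 * S) -> K m.+1 * E m.+1 j = K m * S.
Proof.
move=> h; have hn : (m.+1%:R : rat) != 0 by rewrite pnatr_eq0.
apply: (mulfI hn).
rewrite mulrA (mulrC _ (K m.+1)) -mulrA h mulrA Kstep. ring.
Qed.

Lemma QrecTop m : Qpoly m.+1 = Top m (Qpoly m).
Proof.
rewrite (Qform m.+1) (Qform m) Top_scale Top_sum.
have H : forall k : 'I_m.+1, Top m (E m k *: ((1 + 'X)^+k * 'X^(m - k))) =
  (((2 * m + 1)%:R - 2 * k%:R) * E m k) *: ((1 + 'X)^+k * 'X^(m.+1 - k))
  + (((2 * m + 2)%:R + 2 * k%:R) * E m k) *: ((1 + 'X)^+k.+1 * 'X^(m.+1 - k.+1)).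
  move=> k; rewrite Top_scale Top_u; last exact: ltnSE (ltn_ord k).
  by rewrite scalerDr !scalerA !(mulrC (E m k)).
rewrite (eq_bigr _ (fun k _ => H k)).
rewrite (shift m (fun k => ((2 * m + 1)%:R - 2 * k%:R) * E m k)
    (fun k => ((2 * m + 2)%:R + 2 * k%:R) * E m k) (fun j => (1 + 'X)^+j * 'X^(m.+1 - j))).
rewrite !scaler_sumr; apply: eq_bigr => j _; rewrite !scalerA; congr (_ *: _).
apply: coefK; exact: Eid (ltnSE (ltn_ord j)).
Qed.

Lemma RrecSop m : Qrev m.+1 = Sop m (Qrev m).
Proof.
rewrite (Rform m.+1) (Rform m) Sop_scale Sop_sum.
have H : forall k : 'I_m.+1, Sop m (E m k *: (1 + 'X)^+k) =
  (((2 * m + 1)%:R - 2 * k%:R) * E m k) *: (1 + 'X)^+k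
  + (((2 * m + 2)%:R + 2 * k%:R) * E m k) *: (1 + 'X)^+k.+1.
  move=> k; rewrite Sop_scale Sop_u.
  by rewrite scalerDr !scalerA !(mulrC (E m k)).
rewrite (eq_bigr _ (fun k _ => H k)).
rewrite (shift m (fun k => ((2 * m + 1)%:R - 2 * k%:R) * E m k)
    (fun k => ((2 * m + 2)%:R + 2 * k%:R) * E m k) (fun j => (1 + 'X)^+j)).
rewrite !scaler_sumr; apply: eq_bigr => j _; rewrite !scalerA; congr (_ *: _).
apply: coefK; exact: Eid (ltnSE (ltn_ord j)).
Qed.

Lemma nz1X : (1 - 'X : {poly rat}) != 0.
Proof.
apply/negP => /eqP h; have := congr1 (fun p : {poly rat} => p.[0]) h.
rewrite /= !hornerE => /eqP; by rewrite oner_eq0.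
Qed.

Lemma divfac (p : {poly rat}) : root p 1 -> (p %/ (1 - 'X)) * (1 - 'X) = p.
Proof.
move=> hr; have hd : ('X - 1%:P) %| p by rewrite -root_factor_theorem.
have e : p = (- (p %/ ('X - 1%:P))) * (1 - 'X).
  rewrite -{1}(divpK hd) polyC1; ring.
by rewrite {1}e mulpK ?nz1X // -e.
Qed.

Lemma QR1 m : (Qpoly m).[1] = (Qrev m).[1].
Proof.
rewrite /Qpoly /Qrev !horner_sum; apply: eq_bigr => i _.
by rewrite !hornerZ !hornerXn !expr1n.
Qed.

Lemma abQ m : Qpoly m = apoly m + 'X * bpoly m /\ Qrev m = apoly m + bpoly m.
Proof.
have ha : apoly m * (1 - 'X) = Qpoly m - 'X * Qrev m.
  rewrite /apoly divfac // /root !hornerE QR1; by rewrite subrr.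
have hb : bpoly m * (1 - 'X) = Qrev m - Qpoly m.
  rewrite /bpoly divfac // /root !hornerE QR1; by rewrite subrr.
split; apply: (mulIf nz1X).
  rewrite mulrDl -mulrA hb ha; ring.
rewrite mulrDl hb ha; ring.
Qed.

Lemma ga_coef n k : (ga n k)`_k = 1.
Proof.
rewrite /ga coefXnM ltnn subnn -horner_coef0 hornerE /= !hornerE.
by rewrite expr1n.
Qed.

Lemma ga_coef_lt n k i : (i < k)%N -> (ga n k)`_i = 0.
Proof. by move=> h; rewrite /ga coefXnM h. Qed.

Lemma ga_indep (n N : nat) (c : nat -> rat) :
  (forall k, (n < 2 * k)%N -> c k = 0) ->
  \sum_(k < N) c k *: ga n k = 0 -> forall k, (k < N)%N -> c k = 0.
Proof.
move=> hc hs k; elim/ltn_ind: k => k IH hk.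
case: (ltnP n (2 * k)) => h2; first exact: hc.
have := congr1 (fun p : {poly rat} => p`_k) hs.
rewrite /= coef_sum coef0 (bigD1 (Ordinal hk)) //= big1.
  by rewrite addr0 coefZ ga_coef mulr1.
move=> i hi; rewrite coefZ.
case: (ltngtP i k) => hik.
- by rewrite IH ?mul0r //; apply: ltn_trans hik hk.
- by rewrite ga_coef_lt // mulr0.
- by move: hi; rewrite -(inj_eq val_inj) /= hik eqxx.
Qed.

Lemma TopA m (c : nat -> rat) : (forall k, (m < 2 * k)%N -> c k = 0) ->
  Top m (\sum_(k < m.+2) c k *: ga m k) =
  \sum_(k < m.+2) ((2 * ((2 * m + 1)%:R - k%:R) * c k) *: ga m.+1 k
                   + ((1 + 4 * k%:R) * c k) *: ('X * ga m k)).
Proof.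
move=> hc; rewrite Top_sum; apply: eq_bigr => k _; rewrite Top_scale.
case: (leqP (2 * k) m) => h.
  by rewrite Top_ga // scalerDr !scalerA !(mulrC (c k)).
by rewrite hc // !mulr0 !scale0r addr0.
Qed.

Lemma SopA m (c : nat -> rat) : (forall k, (m < 2 * k)%N -> c k = 0) ->
  Sop m (\sum_(k < m.+2) c k *: ga m k) =
  \sum_(k < m.+2) ((2 * ((2 * m + 1)%:R - k%:R) * c k) *: ga m.+1 k
                   + ((1 + 4 * k%:R) * c k) *: ga m k).
Proof.
move=> hc; rewrite Sop_sum; apply: eq_bigr => k _; rewrite Sop_scale.
case: (leqP (2 * k) m) => h.
  by rewrite Sop_ga // scalerDr !scalerA !(mulrC (c k)).
by rewrite hc // !mulr0 !scale0r addr0.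
Qed.

Lemma TopB m (c : nat -> rat) : (forall k, (m <= 2 * k)%N -> c k = 0) ->
  Top m ('X * \sum_(k < m.+2) c k *: gb m k) =
  \sum_(k < m.+2) (((- (4 * k%:R + 3)) * c k) *: ga m.+1 k.+1
                   + ((4 * m%:R + 2 * k%:R + 3) * c k) *: ('X * ga m k)).
Proof.
move=> hc; rewrite mulr_sumr Top_sum; apply: eq_bigr => k _; rewrite -scalerAr Top_scale.
case: (ltnP (2 * k) m) => h.
  by rewrite Top_gb // scalerDr !scalerA !(mulrC (c k)).
by rewrite hc // !mulr0 !scale0r addr0.
Qed.

Lemma SopB m (c : nat -> rat) : (forall k, (m <= 2 * k)%N -> c k = 0) ->
  Sop m (\sum_(k < m.+2) c k *: gb m k) =
  \sum_(k < m.+2) (((- (4 * k%:R + 3)) * c k) *: ga m.+1 k.+1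
                   + ((4 * m%:R + 2 * k%:R + 3) * c k) *: ga m k).
Proof.
move=> hc; rewrite Sop_sum; apply: eq_bigr => k _; rewrite Sop_scale.
case: (ltnP (2 * k) m) => h.
  by rewrite Sop_gb // scalerDr !scalerA !(mulrC (c k)).
by rewrite hc // !mulr0 !scale0r addr0.
Qed.

Lemma merge2 (N : nat) (u v x y : nat -> rat) (w z : nat -> {poly rat}) : v N = 0 ->
  \sum_(k < N.+1) (u k *: w k + x k *: z k) + \sum_(k < N.+1) (v k *: w k.+1 + y k *: z k) =
  \sum_(k < N.+1) ((u k + (if (k : nat) is k'.+1 then v k' else 0)) *: w k)
  + \sum_(k < N.+1) ((x k + y k) *: z k).
Proof.
move=> hv.
have e : \sum_(k < N.+1) v k *: w k.+1 = \sum_(k < N.+1) (if (k : nat) is k'.+1 then v k' else 0) *: w k.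
  rewrite big_ord_recr /= hv scale0r addr0 [in RHS]big_ord_recl /= scale0r add0r.
  by [].
have e2 : \sum_(k < N.+1) ((u k + (if (k : nat) is k'.+1 then v k' else 0)) *: w k) =
   \sum_(k < N.+1) (u k *: w k) + \sum_(k < N.+1) ((if (k : nat) is k'.+1 then v k' else 0) *: w k).
  rewrite -big_split /=; apply: eq_bigr => k _; by rewrite scalerDl.
have e3 : \sum_(k < N.+1) ((x k + y k) *: z k) =
   \sum_(k < N.+1) (x k *: z k) + \sum_(k < N.+1) (y k *: z k).
  rewrite -big_split /=; apply: eq_bigr => k _; by rewrite scalerDl.
rewrite e2 e3 -e !big_split /=.
rewrite -!addrA; congr (_ + _); rewrite addrC -!addrA; congr (_ + _); by rewrite addrC.
Qed.

Definition at_ (alpha : nat -> nat -> rat) m k := if (2 * k <= m)%N then alpha m k else 0.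
Definition bt_ (beta : nat -> nat -> rat) m k := if (2 * k < m)%N then beta m k else 0.
Definition alpha' alpha beta m k : rat :=
  2 * ((2 * m + 1)%:R - k%:R) * at_ alpha m k
  - (if k is k'.+1 then (4 * k'%:R + 3) * bt_ beta m k' else 0).
Definition beta' alpha beta m k : rat :=
  (1 + 4 * k%:R) * at_ alpha m k + (4 * m%:R + 2 * k%:R + 3) * bt_ beta m k.

Lemma widenA (alpha : nat -> nat -> rat) n :
  \sum_(k < n./2.+1) alpha n k *: ('X^k * (1 + 'X) ^+ (n - 2 * k)) =
  \sum_(k < n.+2) at_ alpha n k *: ga n k.
Proof.
rewrite (@widen _ n./2 n.+1 (fun k => at_ alpha n k *: ga n k)); last first.
- by move=> i hi; rewrite /at_ ifF ?scale0r //; apply/negbTE; rewrite -ltnNge; move: hi; rewrite -divn2; lia.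
- by rewrite -divn2; lia.
apply: eq_bigr => [[k hk]] _ /=; rewrite /at_ ifT //; move: hk; rewrite -divn2; lia.
Qed.

Lemma widenB (beta : nat -> nat -> rat) n : (1 <= n)%N ->
  \sum_(k < n.-1./2.+1) beta n k *: ('X^k * (1 + 'X) ^+ (n - 1 - 2 * k)) =
  \sum_(k < n.+2) bt_ beta n k *: gb n k.
Proof.
move=> hn.
rewrite (@widen _ n.-1./2 n.+1 (fun k => bt_ beta n k *: gb n k)); last first.
- by move=> i hi; rewrite /bt_ ifF ?scale0r //; apply/negbTE; rewrite -leqNgt; move: hi; rewrite -divn2; lia.
- by rewrite -divn2; lia.
apply: eq_bigr => [[k hk]] _ /=; rewrite /bt_ ifT //; move: hk; rewrite -divn2; lia.
Qed.

Lemma alpha'0 alpha beta m k : (m.+1 < 2 * k)%N -> alpha' alpha beta m k = 0.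
Proof.
move=> h; rewrite /alpha' /at_ ifF; last by apply/negbTE; rewrite -ltnNge; lia.
case: k h => [|k] h; first by lia.
rewrite /bt_ ifF; last by apply/negbTE; rewrite -leqNgt; lia.
by rewrite !mulr0 subrr.
Qed.

Lemma beta'0 alpha beta m k : (m < 2 * k)%N -> beta' alpha beta m k = 0.
Proof.
move=> h; rewrite /beta' /at_ ifF; last by apply/negbTE; rewrite -ltnNge; lia.
rewrite /bt_ ifF; last by apply/negbTE; rewrite -leqNgt; lia.
by rewrite !mulr0 addr0.
Qed.

Lemma main_rec (alpha beta : nat -> nat -> rat)
  (Halpha : forall n : nat,
     apoly n = \sum_(k < n./2.+1) alpha n k *: ('X^k * (1 + 'X) ^+ (n - 2 * k)))
  (Hbeta : forall n : nat, (1 <= n)%N ->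
     bpoly n = \sum_(k < n.-1./2.+1) beta n k *: ('X^k * (1 + 'X) ^+ (n - 1 - 2 * k)))
  (m : nat) (hm : (1 <= m)%N) :
  (forall k, (2 * k <= m.+1)%N -> alpha m.+1 k = alpha' alpha beta m k) /\
  (forall k, (2 * k <= m)%N -> beta m.+1 k = beta' alpha beta m k).
Proof.
pose A := \sum_(k < m.+2) alpha' alpha beta m k *: ga m.+1 k.
pose B := \sum_(k < m.+2) beta' alpha beta m k *: ga m k.
have [hQ hR] := abQ m.
have ha := Halpha m; rewrite widenA in ha.
have hb := Hbeta m hm; rewrite widenB // in hb.
have vanA : forall k, (m < 2 * k)%N -> at_ alpha m k = 0.
  by move=> k h; rewrite /at_ ifF //; apply/negbTE; rewrite -ltnNge.
have vanB : forall k, (m <= 2 * k)%N -> bt_ beta m k = 0.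
  by move=> k h; rewrite /bt_ ifF //; apply/negbTE; rewrite -leqNgt.
have hv : (- (4 * (m.+1)%:R + 3)) * bt_ beta m m.+1 = 0 by rewrite vanB ?mulr0 //; lia.
have HQ : Qpoly m.+1 = A + 'X * B.
  rewrite QrecTop hQ ha hb Top_add TopA // TopB //.
  rewrite (@merge2 m.+1 (fun k => 2 * ((2 * m + 1)%:R - k%:R) * at_ alpha m k)
     (fun k => (- (4 * k%:R + 3)) * bt_ beta m k)
     (fun k => (1 + 4 * k%:R) * at_ alpha m k)
     (fun k => (4 * m%:R + 2 * k%:R + 3) * bt_ beta m k)
     (fun k => ga m.+1 k) (fun k => 'X * ga m k) hv).
  congr (_ + _).
    apply: eq_bigr => [[k hk]] _ /=; congr (_ *: _); rewrite /alpha'.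
    case: k hk => [|k] hk /=; first by rewrite addr0 subr0.
    ring.
  rewrite /B mulr_sumr; apply: eq_bigr => k _; by rewrite -scalerAr.
have HR : Qrev m.+1 = A + B.
  rewrite RrecSop hR ha hb Sop_add SopA // SopB //.
  rewrite (@merge2 m.+1 (fun k => 2 * ((2 * m + 1)%:R - k%:R) * at_ alpha m k)
     (fun k => (- (4 * k%:R + 3)) * bt_ beta m k)
     (fun k => (1 + 4 * k%:R) * at_ alpha m k)
     (fun k => (4 * m%:R + 2 * k%:R + 3) * bt_ beta m k)
     (fun k => ga m.+1 k) (fun k => ga m k) hv).
  congr (_ + _).
  apply: eq_bigr => [[k hk]] _ /=; congr (_ *: _); rewrite /alpha'.
  case: k hk => [|k] hk /=; first by rewrite addr0 subr0.
  ring.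
have hA : apoly m.+1 = A.
  rewrite /apoly HQ HR (_ : A + 'X * B - 'X * (A + B) = A * (1 - 'X)); last ring.
  by rewrite mulpK // nz1X.
have hB : bpoly m.+1 = B.
  rewrite /bpoly HQ HR (_ : A + B - (A + 'X * B) = B * (1 - 'X)); last ring.
  by rewrite mulpK // nz1X.
split.
  have eA : A = \sum_(k < m.+3) alpha' alpha beta m k *: ga m.+1 k.
    rewrite [in RHS]big_ord_recr /= (@alpha'0 alpha beta m m.+2) ?scale0r ?addr0 //; lia.
  have e := Halpha m.+1; rewrite widenA hA eA in e.
  have z : \sum_(k < m.+3) (alpha' alpha beta m k - at_ alpha m.+1 k) *: ga m.+1 k = 0.
    under eq_bigr do rewrite scalerBl.
    by rewrite sumrB e subrr.
  move=> k hk.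
  have h0 : forall i, (m.+1 < 2 * i)%N -> alpha' alpha beta m i - at_ alpha m.+1 i = 0.
    move=> i hi; rewrite alpha'0 // /at_ ifF ?subrr //; apply/negbTE; rewrite -ltnNge //.
  have := ga_indep h0 z (ltac:(lia) : (k < m.+3)%N).
  by rewrite /at_ hk => /eqP; rewrite subr_eq0 => /eqP ->.
have eB : B = \sum_(k < m.+3) beta' alpha beta m k *: ga m k.
  rewrite [in RHS]big_ord_recr /= (@beta'0 alpha beta m m.+2) ?scale0r ?addr0 //; lia.
have e := Hbeta m.+1 isT; rewrite widenB // hB eB in e.
have gg : forall k, gb m.+1 k = ga m k by move=> k; rewrite /gb /ga subSS subn0.
have z : \sum_(k < m.+3) (beta' alpha beta m k - bt_ beta m.+1 k) *: ga m k = 0.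
  under eq_bigr do rewrite scalerBl.
  rewrite sumrB e; apply/eqP; rewrite subr_eq0; apply/eqP.
  by apply: eq_bigr => k _; rewrite gg.
move=> k hk.
have h0 : forall i, (m < 2 * i)%N -> beta' alpha beta m i - bt_ beta m.+1 i = 0.
  move=> i hi; rewrite beta'0 // /bt_ ifF ?subrr //; apply/negbTE; rewrite -leqNgt //.
have := ga_indep h0 z (ltac:(lia) : (k < m.+3)%N).
by rewrite /bt_ ltnS hk => /eqP; rewrite subr_eq0 => /eqP ->.
Qed.

Theorem lemma3p2 (alpha beta : nat -> nat -> rat)
  (Halpha : forall n : nat,
     apoly n = \sum_(k < n./2.+1) alpha n k *: ('X^k * (1 + 'X) ^+ (n - 2 * k)))
  (Hbeta : forall n : nat, (1 <= n)%N ->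
     bpoly n = \sum_(k < n.-1./2.+1) beta n k *: ('X^k * (1 + 'X) ^+ (n - 1 - 2 * k)))
  (m : nat) (hm : (1 <= m)%N) :
  (forall t : nat, m = (2 * t)%N ->
     (forall k : nat, (1 <= k <= t)%N ->
        alpha m.+1 k = 2 * ((2 * m + 1)%:R - k%:R) * alpha m k
                       - (4 * k%:R - 1) * beta m k.-1)
     /\ (forall k : nat, (k <= t - 1)%N ->
        beta m.+1 k = (1 + 4 * k%:R) * alpha m k
                      + (4 * m%:R + 2 * k%:R + 3) * beta m k)
     /\ alpha m.+1 0%N = 2 * (2 * m%:R + 1) * alpha m 0%N
     /\ beta m.+1 t = (1 + 4 * t%:R) * alpha m t)
  /\
  (forall t : nat, m = (2 * t + 1)%N ->
     (forall k : nat, (1 <= k <= t)%N ->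
        alpha m.+1 k = 2 * ((2 * m + 1)%:R - k%:R) * alpha m k
                       - (4 * k%:R - 1) * beta m k.-1)
     /\ alpha m.+1 0%N = 2 * (2 * m%:R + 1) * alpha m 0%N
     /\ alpha m.+1 t.+1 = - (3 + 4 * t%:R) * beta m t
     /\ (forall k : nat, (k <= t)%N ->
        beta m.+1 k = (1 + 4 * k%:R) * alpha m k
                      + (4 * m%:R + 2 * k%:R + 3) * beta m k)).
Proof.
have [HA HB] := main_rec Halpha Hbeta hm.
have A1 : forall k, (1 <= k)%N -> (2 * k <= m)%N ->
    alpha m.+1 k = 2 * ((2 * m + 1)%:R - k%:R) * alpha m k - (4 * k%:R - 1) * beta m k.-1.
  move=> k h1 h2; rewrite HA; last lia.
  rewrite /alpha' /at_ /bt_; case: k h1 h2 => [|k] // h1 h2 /=.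
  rewrite h2; case: (ltnP (2 * k) m) => h3; last lia.
  rewrite -natr1; ring.
have A0 : alpha m.+1 0%N = 2 * (2 * m%:R + 1) * alpha m 0%N.
  rewrite HA // /alpha' /at_ /=; ring.
have B1 : forall k, (2 * k < m)%N ->
    beta m.+1 k = (1 + 4 * k%:R) * alpha m k + (4 * m%:R + 2 * k%:R + 3) * beta m k.
  move=> k h; rewrite HB; last lia.
  rewrite /beta' /at_ /bt_ h; case: (leqP (2 * k) m) => h2 //; lia.
split=> t ht.
  split; first by move=> k /andP [h1 h2]; apply: A1 => //; lia.
  split; first by move=> k hk; apply: B1; lia.
  split; first exact: A0.
  rewrite HB; last lia.
  rewrite /beta' /at_ /bt_; case: (leqP (2 * t) m) => h1; last lia.
  case: (ltnP (2 * t) m) => h2; first lia.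
  by rewrite mulr0 addr0.
split; first by move=> k /andP [h1 h2]; apply: A1 => //; lia.
split; first exact: A0.
split.
  rewrite HA; last lia.
  rewrite /alpha' /at_ /bt_; case: (leqP (2 * t.+1) m) => h1; first lia.
  case: (ltnP (2 * t) m) => h2; last lia.
  rewrite ht natrD natrM; ring.
by move=> k hk; apply: B1; lia.
Qed.
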